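(* Let $X \subset Y \subset \mathbb{R}^{n}$ be finite sets, with $X$ having at least $k+1$ points. Define $i_{\ast}: \operatorname{Br}_{k}(X) \to \operatorname{Br}_{k}(Y)$ by sending a branch point $(s,[x])$ of $\Gamma_k(X)$ to the maximal branch point of $\Gamma_{k}(Y)$ below $(s,[x])$, where $x$ is regarded as a vertex of $L_{s,k}(Y)$. Then $i_*$ is order-preserving, and for all branch points $a,b$ of $\Gamma_{k}(X)$, \[ i_{\ast}(a) \cup i_{\ast}(b) \leq i_{\ast}(a \cup b), \] where the join on the left is taken in $\Gamma_{k}(Y)$ and the join $a \cup b$ on the right in $\Gamma_{k}(X)$.
   Context: $\mathbb{R}^n$ has Euclidean metric $d$. For $s\ge 0$, $V_s(X)$ is the Vietoris–Rips complex (vertex set $X$, simplices nonempty subsets with pairwise distances $\le s$), and for an integer $k\ge 0$, $L_{s,k}(X)$ is the full subcomplex of $V_s(X)$ on the vertices $x$ having at least $k$ points $x'\ne x$ of $X$ with $d(x,x')\le s$; for $X \subset Y$, $L_{s,k}(X) \subset L_{s,k}(Y)$. $\Gamma_{k}(X)$ is the poset whose elements are pairs $(s,[x])$ with $s \in \mathbb{R}_{\geq 0}$ and $[x] \in \pi_{0}L_{s,k}(X)$, with $(s,[x]) \leq (t,[y])$ iff $s \leq t$ and the function $\pi_{0}L_{s,k}(X) \to \pi_{0}L_{t,k}(X)$ induced by inclusion sends $[x]$ to $[y]$. $\cup$ denotes least upper bound (join), which exists for any two elements. An element $(t,[x])$ is a branch point if either (1) there is $s_{0} < t$ such that for all $s$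 with $s_{0} \leq s < t$ there are two distinct elements $(s,[x_{0}]) \neq (s,[x_{1}])$ both $\leq (t,[x])$; or (2) there is no element $(s,[y])$ with $s<t$ and $(s,[y]) \leq (t,[x])$. $\operatorname{Br}_{k}(X)$ is the poset of branch points. Every element $p$ has a unique maximal branch point below it: a branch point $b \le p$ with $b' \le b$ for all branch points $b' \le p$. *)

(* Defs.v *)
From Stdlib Require Import Reals List Relations ClassicalEpsilon.
Import ListNotations.
Open Scope R_scope.

(* Points of R^n are lists of reals of length n; a subset of R^n is a
   predicate on lists all of whose members have length n. *)

Definition dist (x y : list R) : R :=
  sqrt (fold_right Rplus 0 (map (fun p => (fst p - snd p) ^ 2) (combine x y))).

Definition finite_set (X : list R -> Prop) : Prop :=
  exists l : list (list R), forall x, X x <-> In x l.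

Definition at_least (m : nat) (X : list R -> Prop) : Prop :=
  exists l : list (list R), NoDup l /\ length l = m /\ forall x, In x l -> X x.

(* vertex x of L_{s,k}(X): x in X with at least k points x' <> x of X,
   d(x,x') <= s *)
Definition vert (X : list R -> Prop) (s : R) (k : nat) (x : list R) : Prop :=
  X x /\ exists l : list (list R), NoDup l /\ length l = k /\
    forall y, In y l -> X y /\ y <> x /\ dist x y <= s.

Definition edge (X : list R -> Prop) (s : R) (k : nat) : relation (list R) :=
  fun x y => vert X s k x /\ vert X s k y /\ dist x y <= s.

(* x and y are vertices in the same connected component of L_{s,k}(X)
   (pi_0 of a simplicial complex = edge-path components) *)
Definition conn (X : list R -> Prop) (s : R) (k : nat) (x y : list R) : Prop :=
  vert X s k x /\ clos_refl_trans _ (edge X s k) x y.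

(* Representatives (s, x) of elements (s,[x]) of Gamma_k(X) *)
Record GElt := mkG { gs : R; gx : list R }.

Definition validG (X : list R -> Prop) (k : nat) (p : GElt) : Prop :=
  0 <= gs p /\ vert X (gs p) k (gx p).

Definition leG (X : list R -> Prop) (k : nat) (p q : GElt) : Prop :=
  validG X k p /\ validG X k q /\ gs p <= gs q /\ conn X (gs q) k (gx p) (gx q).

Definition eqG (X : list R -> Prop) (k : nat) (p q : GElt) : Prop :=
  leG X k p q /\ leG X k q p.

Definition isBranch (X : list R -> Prop) (k : nat) (q : GElt) : Prop :=
  validG X k q /\
  ((exists s0, s0 < gs q /\
      forall s, s0 <= s < gs q ->
        exists x0 x1, leG X k (mkG s x0) q /\ leG X k (mkG s x1) q /\
                      ~ eqG X k (mkG s x0) (mkG s x1))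
   \/ ~ (exists p, gs p < gs q /\ leG X k p q)).

Definition isJoin (X : list R -> Prop) (k : nat) (a b j : GElt) : Prop :=
  leG X k a j /\ leG X k b j /\
  forall u, leG X k a u -> leG X k b u -> leG X k j u.

Definition maxBrBelow (Y : list R -> Prop) (k : nat) (p b : GElt) : Prop :=
  isBranch Y k b /\ leG Y k b p /\
  forall b', isBranch Y k b' -> leG Y k b' p -> leG Y k b' b.

Definition GElt_inhabited : inhabited GElt := inhabits (mkG 0 nil).

Definition istar (Y : list R -> Prop) (k : nat) (a : GElt) : GElt :=
  epsilon GElt_inhabited (maxBrBelow Y k a).

(* Main.v *)
Require Import Defs.
From Stdlib Require Import Reals List Lra Lia Relations Classical ClassicalEpsilon Wf_nat.
Import ListNotations.
Open Scope R_scope.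

Lemma sumsq_sym : forall x y,
  fold_right Rplus 0 (map (fun p => (fst p - snd p) ^ 2) (combine x y)) =
  fold_right Rplus 0 (map (fun p => (fst p - snd p) ^ 2) (combine y x)).
Proof. induction x as [|a x IH]; intros [|b y]; simpl; try reflexivity.
  rewrite IH. f_equal. ring. Qed.

Lemma dist_sym x y : Defs.dist x y = Defs.dist y x.
Proof. unfold Defs.dist. rewrite sumsq_sym. reflexivity. Qed.

Lemma rt_mono {A} (R1 R2 : relation A) : (forall x y, R1 x y -> R2 x y) ->
  forall x y, clos_refl_trans _ R1 x y -> clos_refl_trans _ R2 x y.
Proof. intros H x y Hr; induction Hr;
  [apply rt_step; auto | apply rt_refl | eapply rt_trans; eauto]. Qed.

Definition flat (Y : list R -> Prop) (a b : R) :=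
  forall x y, Y x -> Y y -> Defs.dist x y <= b -> Defs.dist x y <= a.

Lemma flat_le Y a b : b <= a -> flat Y a b.
Proof. intros H x y _ _ H'; lra. Qed.

Lemma vert_flat Y k a b x : flat Y a b -> vert Y b k x -> vert Y a k x.
Proof. intros Hf [Hx [l [Hn [Hl Hi]]]]. split; auto. exists l; split; [auto|split; [auto|]].
  intros z Hz; destruct (Hi z Hz) as [Hz1 [Hz2 Hz3]].
  split; [auto|split; [auto|apply Hf; auto]]. Qed.

Lemma edge_flat Y k a b x y : flat Y a b -> edge Y b k x y -> edge Y a k x y.
Proof. intros Hf [H1 [H2 H3]]. split; [|split]; [eapply vert_flat; eauto|eapply vert_flat; eauto|].
  apply Hf; auto; [apply H1|apply H2]. Qed.

Lemma conn_flat Y k a b x y : flat Y a b -> conn Y b k x y -> conn Y a k x y.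
Proof. intros Hf [H1 H2]. split; [eapply vert_flat; eauto|].
  eapply rt_mono; [|exact H2]. intros; eapply edge_flat; eauto. Qed.

Lemma vert_sub (X Y : list R -> Prop) s k x : (forall x, X x -> Y x) -> vert X s k x -> vert Y s k x.
Proof. intros HXY [Hx [l [Hn [Hl Hi]]]]. split; auto. exists l; split; [auto|split; [auto|]].
  intros z Hz; destruct (Hi z Hz) as [Hz1 [Hz2 Hz3]]. split; auto. Qed.

Lemma conn_sub (X Y : list R -> Prop) s k x y : (forall x, X x -> Y x) -> conn X s k x y -> conn Y s k x y.
Proof. intros HXY [H1 H2]. split; [eapply vert_sub; eauto|].
  eapply rt_mono; [|exact H2]. intros u v [A [B C]]; split; [|split]; auto; eapply vert_sub; eauto. Qed.

Lemma conn_refl Y s k x : vert Y s k x -> conn Y s k x x.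
Proof. intros; split; auto. apply rt_refl. Qed.

Lemma rt_vert Y s k : forall x y, clos_refl_trans _ (edge Y s k) x y -> vert Y s k x -> vert Y s k y.
Proof. intros x y H; induction H; auto. intros; apply H. Qed.

Lemma conn_trans Y s k x y z : conn Y s k x y -> conn Y s k y z -> conn Y s k x z.
Proof. intros [A B] [C D]. split; auto. eapply rt_trans; eauto. Qed.

Lemma rt_sym Y s k : forall x y, clos_refl_trans _ (edge Y s k) x y -> clos_refl_trans _ (edge Y s k) y x.
Proof. intros x y H; induction H.
  - apply rt_step. destruct H as [A [B C]]. split; [|split]; auto. rewrite dist_sym; auto.
  - apply rt_refl.
  - eapply rt_trans; eauto. Qed.

Lemma conn_sym Y s k x y : conn Y s k x y -> conn Y s k y x.
Proof. intros [A B]. split; [eapply rt_vert; eauto|]. apply rt_sym; auto. Qed.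

Lemma leG_trans Y k p q r : leG Y k p q -> leG Y k q r -> leG Y k p r.
Proof. intros [A [B [C D]]] [E [F [G H]]]. split; [|split; [|split]]; auto; [lra|].
  eapply conn_trans; [|exact H]. eapply conn_flat; [apply flat_le; exact G|exact D]. Qed.

Lemma leG_sub (X Y : list R -> Prop) k p q : (forall x, X x -> Y x) -> leG X k p q -> leG Y k p q.
Proof. intros HXY [[A1 A2] [[B1 B2] [C D]]]. split; [|split; [|split]]; auto.
  - split; auto; eapply vert_sub; eauto.
  - split; auto; eapply vert_sub; eauto.
  - eapply conn_sub; eauto. Qed.

Lemma eqG_branch Y k p q : eqG Y k p q -> isBranch Y k p -> isBranch Y k q.
Proof.
  intros [Hpq Hqp] [Hv H].
  assert (Hs : gs p = gs q) by (destruct Hpq as [_ [_ [? _]]]; destruct Hqp as [_ [_ [? _]]]; lra).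
  split. { destruct Hpq as [_ [? _]]; auto. }
  destruct H as [[s0 [Hs0 H]] | H].
  - left. exists s0. split; [lra|]. intros s Hs'. destruct (H s ltac:(lra)) as [x0 [x1 [H0 [H1 H2]]]].
    exists x0, x1. split; [|split]; [eapply leG_trans; eauto | eapply leG_trans; eauto | exact H2].
  - right. intros [p' [Hlt Hle]]. apply H. exists p'. split; [lra|]. eapply leG_trans; eauto.
Qed.

Lemma no_branch_flat Y k b d0 : isBranch Y k b -> 0 <= d0 -> d0 < gs b -> flat Y d0 (gs b) -> False.
Proof.
  intros [[Hb0 Hbv] H] Hd0 Hlt Hf.
  destruct H as [[s0 [Hs0 H]] | H].
  - set (s := Rmax s0 d0).
    assert (Hs: s0 <= s < gs b) by (unfold s, Rmax; destruct (Rle_dec s0 d0); lra).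
    assert (Hds : d0 <= s) by (unfold s, Rmax; destruct (Rle_dec s0 d0); lra).
    destruct (H s Hs) as [x0 [x1 [H0 [H1 H2]]]]. apply H2.
    assert (Hfs : flat Y s (gs b)) by (intros u v Hu Hv Hd; specialize (Hf u v Hu Hv Hd); lra).
    destruct H0 as [V0 [_ [_ C0]]]. destruct H1 as [V1 [_ [_ C1]]]. simpl in *.
    split; (split; [auto|split; [auto|split; [simpl; lra|]]]); simpl;
      eapply conn_flat; eauto; eapply conn_trans; eauto; apply conn_sym; auto.
  - apply H. exists (mkG d0 (gx b)). simpl. split; auto.
    split; [|split; [|split]]; simpl.
    + split; simpl; auto. eapply vert_flat; eauto.
    + split; auto.
    + lra.
    + apply conn_refl; auto.
Qed.
Lemma list_max (C : list R) (Q : R -> Prop) : (exists c, In c C /\ Q c) ->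
  exists d, In d C /\ Q d /\ forall c, In c C -> Q c -> c <= d.
Proof.
  induction C as [|a C IH]; intros [c [Hc HQ]]; [destruct Hc|].
  destruct (classic (exists c, In c C /\ Q c)) as [He|Hn].
  - destruct (IH He) as [d [Hd [HQd Hm]]].
    destruct (classic (Q a)) as [Ha|Ha]; [destruct (Rle_dec a d)|].
    + exists d. split; [right; auto|split; auto]. intros c' [<-|Hc'] Hq; auto.
    + exists a. split; [left; auto|split; auto]. intros c' [<-|Hc'] Hq; [lra|].
      specialize (Hm c' Hc' Hq); lra.
    + exists d. split; [right; auto|split; auto]. intros c' [<-|Hc'] Hq; [tauto|auto].
  - exists a. destruct Hc as [<-|Hc]; [|exfalso; apply Hn; eauto].
    split; [left; auto|split; auto]. intros c' [<-|Hc'] Hq; [lra|exfalso; apply Hn; eauto].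
Qed.

Definition cnt (C : list R) (t : R) : nat :=
  length (filter (fun c => if Rle_dec c t then true else false) C).

Lemma cnt_le C a b : a <= b -> (cnt C a <= cnt C b)%nat.
Proof. intros Hab; unfold cnt; induction C as [|x C IH]; simpl; [lia|].
  destruct (Rle_dec x a); destruct (Rle_dec x b); simpl; try lia. lra. Qed.

Lemma cnt_lt C a b d : a < d -> d <= b -> In d C -> (cnt C a < cnt C b)%nat.
Proof. intros H1 H2; induction C as [|x C IH]; intros Hin; [destruct Hin|].
  assert (Hle := cnt_le C a b ltac:(lra)). unfold cnt in *; simpl.
  destruct Hin as [<-|Hin].
  - destruct (Rle_dec x a); [lra|]. destruct (Rle_dec x b); [|lra]. simpl; lia.
  - specialize (IH Hin).
    destruct (Rle_dec x a); destruct (Rle_dec x b); simpl; try lia. lra.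
Qed.

Definition Cs (Yl : list (list R)) : list R := 0 :: flat_map (fun a => map (Defs.dist a) Yl) Yl.

Lemma dist_in (Y : list R -> Prop) Yl (HY : forall x, Y x <-> In x Yl) x y :
  Y x -> Y y -> In (Defs.dist x y) (Cs Yl).
Proof. intros Hx Hy. right. apply in_flat_map. exists x. split; [apply HY; auto|].
  apply in_map. apply HY; auto. Qed.

Lemma exists_max Y k Yl (HY : forall x, Y x <-> In x Yl) :
  forall N p, cnt (Cs Yl) (gs p) = N -> validG Y k p -> exists b, maxBrBelow Y k p b.
Proof.
  intros N; induction N as [N IH] using (well_founded_induction lt_wf).
  intros [t y] HN [Ht0 Hty]; simpl in *.
  set (C := Cs Yl) in *.
  assert (H0C : In 0 C) by (left; auto).
  destruct (list_max C (fun c => c <= t)) as [d [Hd [Hdt Hdm]]]; [exists 0; auto|].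
  assert (Hd0 : 0 <= d) by (apply Hdm; auto).
  assert (Hfl : flat Y d t).
  { intros u v Hu Hv Hdu. apply Hdm; auto. apply (dist_in Y Yl HY); auto. }
  set (q := mkG d y).
  assert (Hqv : validG Y k q) by (split; simpl; auto; eapply vert_flat; eauto).
  assert (Hqp : leG Y k q (mkG t y)).
  { split; [auto|split; [split; auto|split; simpl; auto]]. apply conn_refl; auto. }
  assert (ClaimG : forall b', isBranch Y k b' -> leG Y k b' (mkG t y) -> gs b' <= d /\ leG Y k b' q).
  { intros b' Hb Hle. destruct (Rle_dec (gs b') d) as [Hr|Hr].
    - split; auto. destruct Hle as [V1 [V2 [L C1]]]. split; [auto|split; [auto|split; [simpl; auto|]]].
      simpl in *. eapply conn_flat; eauto.
    - exfalso. apply (no_branch_flat Y k b' d); auto; [lra|].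
      destruct Hle as [_ [_ [L _]]]; simpl in L.
      intros u v Hu Hv Hdu. apply Hfl; auto. lra. }
  destruct (classic (isBranch Y k q)) as [HB|HnB].
  - exists q. split; [auto|split; auto]. intros b' Hb Hle; apply ClaimG; auto.
  - assert (Hdpos : 0 < d).
    { destruct (Rle_lt_dec d 0) as [Hr|Hr]; auto. exfalso. apply HnB. split; auto. right.
      intros [p' [Hlt [[Hp0 _] _]]]. simpl in Hlt. lra. }
    destruct (list_max C (fun c => c < d)) as [d' [Hd' [Hd'd Hd'm]]]; [exists 0; auto|].
    assert (Hd'0 : 0 <= d') by (apply Hd'm; auto).
    assert (Hfp : forall s, s < d -> flat Y d' s).
    { intros s Hs u v Hu Hv Hdu. apply Hd'm; [apply (dist_in Y Yl HY); auto|lra]. }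
    assert (HnA : ~ (exists s0, s0 < gs q /\
      forall s, s0 <= s < gs q ->
        exists x0 x1, leG Y k (mkG s x0) q /\ leG Y k (mkG s x1) q /\
                      ~ eqG Y k (mkG s x0) (mkG s x1))) by (intro; apply HnB; split; auto).
    assert (HB2 : exists p', gs p' < gs q /\ leG Y k p' q)
      by (apply NNPP; intro; apply HnB; split; auto).
    destruct HB2 as [p' [Hp'lt Hp'q]]. simpl in Hp'lt.
    assert (Hs : exists s, d' <= s < d /\ forall x0 x1, leG Y k (mkG s x0) q ->
                    leG Y k (mkG s x1) q -> eqG Y k (mkG s x0) (mkG s x1)).
    { apply NNPP; intro Hn. apply HnA. exists d'. split; [simpl; auto|]. intros s Hs.
      apply NNPP; intro Hn2. apply Hn. exists s. split; [simpl in Hs; lra|].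
      intros x0 x1 H0 H1. apply NNPP; intro Hn3. apply Hn2. exists x0, x1. auto. }
    destruct Hs as [s [Hs Hall]].
    set (q' := mkG d' (gx p')).
    destruct Hp'q as [[Hp'0 Hp'v] [_ [_ Hp'c]]]. simpl in Hp'c.
    assert (Hq'v : validG Y k q') by (split; simpl; auto; eapply vert_flat; [apply (Hfp (gs p')); auto|exact Hp'v]).
    assert (Hq'q : leG Y k q' q) by (split; [auto|split; [auto|split; simpl; auto; lra]]).
    assert (Huniq : forall z, vert Y d' k z -> conn Y d k z y -> eqG Y k (mkG d' z) q').
    { intros z Hz Hzc.
      assert (E : eqG Y k (mkG s z) (mkG s (gx p'))).
      { apply Hall.
        - split; [split; simpl; [lra|eapply (vert_flat Y k s d'); [apply flat_le; lra|exact Hz]]|].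
          split; auto. split; simpl; auto. lra.
        - split; [split; simpl; [lra|eapply (vert_flat Y k s d'); [apply flat_le; lra|exact (proj2 Hq'v)]]|].
          split; auto. split; simpl; auto. lra. }
      destruct E as [[_ [_ [_ E1]]] [_ [_ [_ E2]]]]. simpl in *.
      assert (Hzv : validG Y k (mkG d' z)) by (split; simpl; auto).
      split; unfold leG; repeat split; simpl; auto; try lra; try apply Hzv; try apply Hq'v;
        try (eapply conn_flat; [apply (Hfp s); lra|]; auto). }
    assert (Hcnt : (cnt C d' < N)%nat) by (rewrite <- HN; eapply cnt_lt; eauto).
    destruct (IH _ Hcnt q' eq_refl Hq'v) as [b [Hbb [Hbq' Hbm]]].
    exists b. split; [auto|split].
    + eapply leG_trans; [exact Hbq'|]. eapply leG_trans; eauto.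
    + intros b' Hb' Hle. destruct (ClaimG b' Hb' Hle) as [Hbd Hbq].
      destruct (Rlt_le_dec (gs b') d) as [Hlt|Hge].
      * destruct (Rle_dec (gs b') d') as [Hle'|Hgt].
        2:{ exfalso. apply (no_branch_flat Y k b' d'); [exact Hb'|exact Hd'0|lra|apply Hfp; exact Hlt]. }
        destruct Hbq as [[Hb0 Hbv] [_ [_ Hbc]]]. simpl in Hbc.
        assert (Hzv : vert Y d' k (gx b')) by (eapply vert_flat; [apply flat_le|]; eauto).
        destruct (Huniq _ Hzv Hbc) as [E1 _].
        apply Hbm; auto. eapply leG_trans; [|exact E1].
        split; [split; auto|split; [split; simpl; auto|split; simpl; auto]].
        apply conn_refl; auto.
      * exfalso. apply HnB. apply (eqG_branch Y k b'); auto. split; auto.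
        destruct Hbq as [Vb [_ [_ Hbc]]]. simpl in Hbc.
        split; [auto|split; [auto|split; [simpl; lra|]]]. simpl.
        apply conn_sym. eapply conn_flat; [apply flat_le|]; eauto.
Qed.

Theorem mainTheorem15 (n : nat) (X Y : list R -> Prop) (k : nat)
  (hXY : forall x, X x -> Y x)
  (hYn : forall y, Y y -> length y = n)
  (hXfin : finite_set X) (hYfin : finite_set Y)
  (hXk : at_least (S k) X) :
  (forall a a', isBranch X k a -> isBranch X k a' -> leG X k a a' ->
     leG Y k (istar Y k a) (istar Y k a')) /\
  (forall a b j u, isBranch X k a -> isBranch X k b ->
     isJoin X k a b j ->
     isJoin Y k (istar Y k a) (istar Y k b) u ->
     leG Y k u (istar Y k j)).
Proof.
  destruct hYfin as [Yl HY].
  assert (Hex : forall p, validG Y k p -> maxBrBelow Y k p (istar Y k p)).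
  { intros p Hp. unfold istar. apply epsilon_spec.
    eapply (exists_max Y k Yl HY); eauto. }
  split.
  - intros a a' Ha Ha' Hle. apply (leG_sub X Y) in Hle; auto.
    destruct (Hle) as [Va [Va' _]].
    destruct (Hex a Va) as [B1 [L1 _]]. destruct (Hex a' Va') as [_ [_ M2]].
    apply M2; auto. eapply leG_trans; eauto.
  - intros a b j u Ha Hb [Haj [Hbj _]] [_ [_ Hu]].
    apply (leG_sub X Y) in Haj; auto. apply (leG_sub X Y) in Hbj; auto.
    destruct (Haj) as [Va [Vj _]]. destruct (Hbj) as [Vb _].
    destruct (Hex a Va) as [B1 [L1 _]]. destruct (Hex b Vb) as [B2 [L2 _]].
    destruct (Hex j Vj) as [_ [_ M]].
    apply Hu; apply M; auto; eapply leG_trans; eauto.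
Qed.
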